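(* Let $k\ge0$ and $\mathbf n=(n_1,\dots,n_r)$ with $r\ge1$ and $n_i\ge1$ for all $i$, and let $I:=\{i\in[r]: n_i\ge 2k+3\}$. Then the product $\prod_{i\in I}C_{2k+2}(n_i+1)\times\prod_{i\notin I}\Delta_{n_i}$ is a $(k,\mathbf n)$-PPSN polytope of dimension $(2k+2)|I|+\sum_{i\notin I}n_i$. Consequently $\delta(k,\mathbf n)\le\delta_{pr}(k,\mathbf n)\le (2k+2)|I|+\sum_{i\notin I}n_i$.
   Context: $C_d(m)$ denotes a cyclic polytope: the convex hull of $m$ distinct points on the moment curve $t\mapsto(t,t^2,\dots,t^d)^T$ in $\mathbb R^d$. $\Delta_m$ denotes the $m$-dimensional simplex; for $\mathbf n=(n_1,\dots,n_r)$, $\Delta_{\mathbf n}:=\Delta_{n_1}\times\dots\times\Delta_{n_r}$. The $k$-skeleton of a polytope is the poset of its faces of dimension at most $k$; two $k$-skeleta are combinatorially equivalent if these posets are isomorphic. A convex polytope is $(k,\mathbf n)$-PSN if its $k$-skeleton is combinatorially equivalent to that of $\Delta_{\mathbf n}$, and $(k,\mathbf n)$-PPSN if in addition it is the image under a linear projection of a polytope combinatorially equivalent to $\Delta_{\mathbf n}$. $\delta(k,\mathbf n)$ (resp. $\delta_{pr}(k,\mathbf n)$) is the smallest dimension of a $(k,\mathbf n)$-PSN (resp. $(k,\mathbf n)$-PPSN) polytope. *)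

(* Defs.v *)
From HB Require Import structures.
From mathcomp Require Import all_boot all_order all_algebra.
Set Implicit Arguments. Unset Strict Implicit. Unset Printing Implicit Defensive.
Import Order.TTheory GRing.Theory Num.Theory.
Local Open Scope ring_scope.

Section Polytopes.
Variable R : rcfType.

(* A polytope in R^d is represented as conv of a finite family of points
   V : T -> 'rV[R]_d indexed by a finite type T. *)

Definition dotv d (x y : 'rV[R]_d) : R := (x *m y^T) 0 0.

Definition in_hull (T : finType) d (V : T -> 'rV[R]_d) (x : 'rV[R]_d) : Prop :=
  exists l : T -> R, (forall t, 0 <= l t) /\ \sum_t l t = 1 /\
                     x = \sum_t l t *: V t.

(* Faces of conv V, recorded by the set of indices of the points of V they
   contain: the empty face, and the maximizer sets of linear functionals
   (c = 0 gives the whole polytope). *)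
Definition face_of (T : finType) d (V : T -> 'rV[R]_d) (F : {set T}) : Prop :=
  F = set0 \/
  exists c : 'rV[R]_d, F = [set t | [forall s, dotv c (V s) <= dotv c (V t)]].

(* homogenized point matrix of the points indexed by F; its rank is
   (affine dimension of conv {V t | t in F}) + 1, and 0 for F empty *)
Definition hmx (T : finType) d (V : T -> 'rV[R]_d) (F : {set T}) :
  'M[R]_(#|T|, 1 + d) :=
  \matrix_(i < #|T|) (if enum_val i \in F
                      then row_mx (const_mx 1) (V (enum_val i)) else 0).

(* dimension of the polytope conv V (for T nonempty) *)
Definition pdim (T : finType) d (V : T -> 'rV[R]_d) : nat :=
  (\rank (hmx V setT)).-1.

(* faces of dimension at most k (the empty face, of dimension -1, included) *)
Definition skel (T : finType) d (V : T -> 'rV[R]_d) (k : nat) (F : {set T})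
  : Prop := face_of V F /\ (\rank (hmx V F) <= k.+1)%N.

Definition poset_iso (T U : finType) (P : {set T} -> Prop)
  (Q : {set U} -> Prop) : Prop :=
  exists f : {set T} -> {set U},
    (forall F, P F -> Q (f F)) /\
    (forall G, Q G -> exists2 F, P F & f F = G) /\
    (forall F1 F2, P F1 -> P F2 -> (F1 \subset F2) = (f F1 \subset f F2)).

Definition skel_equiv (T U : finType) d e (V : T -> 'rV[R]_d)
  (W : U -> 'rV[R]_e) (k : nat) : Prop :=
  poset_iso (skel V k) (skel W k).

Definition comb_equiv (T U : finType) d e (V : T -> 'rV[R]_d)
  (W : U -> 'rV[R]_e) : Prop :=
  poset_iso (face_of V) (face_of W).

Definition simplex_pts (n : nat) (j : 'I_n.+1) : 'rV[R]_n :=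
  if unlift ord0 j is Some j' then delta_mx 0 j' else 0.

Definition moment (D : nat) (t : R) : 'rV[R]_D := \row_(a < D) t ^+ a.+1.

Definition prod_pts (r : nat) (T : 'I_r -> finType) (d : 'I_r -> nat)
  (V : forall i, T i -> 'rV[R]_(d i)) (x : {dffun forall i, T i}) :
  'rV[R]_(\sum_i d i) := \mxrow_(i < r) V i (x i).

Definition Delta_pts (r : nat) (n : 'I_r -> nat) :
  {dffun forall i : 'I_r, 'I_(n i).+1} -> 'rV[R]_(\sum_i n i) :=
  @prod_pts r (fun i => 'I_(n i).+1) n (fun i => @simplex_pts (n i)).

Definition PSN (r : nat) (k : nat) (n : 'I_r -> nat)
  (T : finType) d (V : T -> 'rV[R]_d) : Prop :=
  skel_equiv V (@Delta_pts r n) k.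

Definition PPSN (r : nat) (k : nat) (n : 'I_r -> nat)
  (T : finType) d (V : T -> 'rV[R]_d) : Prop :=
  PSN k n V /\
  exists (N : nat) (U : finType) (W : U -> 'rV[R]_N) (A : 'M[R]_(N, d)),
    comb_equiv W (@Delta_pts r n) /\
    (forall x, in_hull V x <-> in_hull (fun u => W u *m A) x).

Definition is_min_dim
  (P : forall (T : finType) d, (T -> 'rV[R]_d) -> Prop) (m : nat) : Prop :=
  (exists (T : finType) d (V : T -> 'rV[R]_d), P T d V /\ pdim V = m) /\
  (forall (T : finType) d (V : T -> 'rV[R]_d), P T d V -> (m <= pdim V)%N).

(* the factors of the product in the theorem: C_{2k+2}(n_i+1) (with
   parameters t_i) when b = (n_i >= 2k+3), and Delta_{n_i} otherwise *)
Definition factor_dim (k ni : nat) : nat :=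
  if (2 * k + 3 <= ni)%N then (2 * k + 2)%N else ni.

Definition factor_pts (k ni : nat) (t : nat -> R) :
  'I_ni.+1 -> 'rV[R]_(factor_dim k ni) :=
  if (2 * k + 3 <= ni)%N as b
     return 'I_ni.+1 -> 'rV[R]_(if b then (2 * k + 2)%N else ni)
  then fun j => moment (2 * k + 2) (t j)
  else @simplex_pts ni.

Definition thm_pts (r k : nat) (n : 'I_r -> nat) (t : 'I_r -> nat -> R) :
  {dffun forall i : 'I_r, 'I_(n i).+1} ->
  'rV[R]_(\sum_i factor_dim k (n i)) :=
  @prod_pts r (fun i => 'I_(n i).+1) (fun i => factor_dim k (n i))
           (fun i => factor_pts k (t i)).

End Polytopes.
Arguments thm_pts {R r} k n t _.

(* Main.v *)
Require Import Defs.
From HB Require Import structures.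
From mathcomp Require Import all_boot all_order all_algebra.
From Stdlib Require Import ClassicalEpsilon Classical.
Import Order.TTheory GRing.Theory Num.Theory.
Local Open Scope ring_scope.

Set Implicit Arguments. Unset Strict Implicit. Unset Printing Implicit Defensive.


Section General.
Variable R : rcfType.

Definition hrow m (v : 'rV[R]_m) : 'rV[R]_(1 + m) := row_mx (const_mx 1) v.

Lemma row_hmx (T : finType) m (V : T -> 'rV[R]_m) F i :
  row i (hmx V F) = if enum_val i \in F then hrow (V (enum_val i)) else 0.
Proof. by rewrite rowK. Qed.

Lemma row_hmx_rank (T : finType) m (V : T -> 'rV[R]_m) F x :
  row (enum_rank x) (hmx V F) = if x \in F then hrow (V x) else 0.
Proof. by rewrite row_hmx enum_rankK. Qed.

Lemma hrow_sub (T : finType) m (V : T -> 'rV[R]_m) (F : {set T}) x :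
  x \in F -> (hrow (V x) <= hmx V F)%MS.
Proof. by move=> xF; apply: (eq_row_sub (enum_rank x)); rewrite row_hmx_rank xF. Qed.

Lemma hmx0 (T : finType) m (V : T -> 'rV[R]_m) : hmx V set0 = 0.
Proof. by apply/row_matrixP => i; rewrite row_hmx inE row0. Qed.

Definition hsel (T : finType) (F : {set T}) (j : 'I_#|F|) : 'I_#|T| :=
  enum_rank (enum_val j).

Lemma hmx_rowsub (T : finType) m (V : T -> 'rV[R]_m) (F : {set T}) :
  (hmx V F <= rowsub (@hsel T F) (hmx V F))%MS.
Proof.
apply/row_subP => i; rewrite row_hmx; case: ifP => iF; last exact: sub0mx.
apply: (eq_row_sub (enum_rank_in iF (enum_val i))).
by rewrite row_rowsub /hsel enum_rankK_in // row_hmx_rank iF.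
Qed.

Lemma rank_hmx_card (T : finType) m (V : T -> 'rV[R]_m) (F : {set T}) :
  (\rank (hmx V F) <= #|F|)%N.
Proof.
apply: leq_trans (mxrankS (hmx_rowsub V F)) _; exact: rank_leq_row.
Qed.

Lemma rank_hmx_mono (T : finType) m (V : T -> 'rV[R]_m) (F G : {set T}) :
  F \subset G -> (\rank (hmx V F) <= \rank (hmx V G))%N.
Proof.
move=> FG; apply: mxrankS; apply/row_subP => i; rewrite row_hmx.
case: ifP => iF; last exact: sub0mx.
exact: hrow_sub (subsetP FG _ iF).
Qed.

Lemma rank_hmx_indep (T : finType) m (V : T -> 'rV[R]_m) (G : {set T})
  (fs : T -> 'cV[R]_(1 + m)) :
  (forall g h, g \in G -> h \in G -> hrow (V h) *m fs g = (g == h)%:R%:M) ->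
  \rank (hmx V G) = #|G|.
Proof.
move=> Hf; apply/eqP; rewrite eqn_leq rank_hmx_card /=.
pose B : 'M[R]_(1 + m, #|G|) := \matrix_(a, j) fs (enum_val j) a 0.
have E : rowsub (@hsel T G) (hmx V G) *m B = 1%:M.
  apply/row_matrixP => j; rewrite row_mul row_rowsub /hsel row_hmx_rank enum_valP.
  apply/rowP => j'; rewrite !mxE.
  have := Hf (enum_val j') (enum_val j) (enum_valP j') (enum_valP j).
  move/matrixP/(_ 0 0); rewrite !mxE /= mulr1n (inj_eq enum_val_inj) eq_sym => <-.
  by apply: eq_bigr => a _; rewrite !mxE.
have := mxrankM_maxl (rowsub (@hsel T G) (hmx V G)) B.
rewrite E mxrank1 => h; apply: leq_trans h _.
exact: mxrankS (rowsub_sub _ _).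
Qed.


Definition dmx (T : finType) m (V : T -> 'rV[R]_m) (F : {set T}) b :
  'M[R]_(#|T|, m) :=
  \matrix_(i < #|T|) (if enum_val i \in F then V (enum_val i) - V b else 0).

Lemma const1E : const_mx 1 = 1%:M :> 'M[R]_1.
Proof. by apply/matrixP => i j; rewrite !mxE !ord1. Qed.

Lemma rank_hmx_dmx (T : finType) m (V : T -> 'rV[R]_m) (F : {set T}) b :
  b \in F -> \rank (hmx V F) = (1 + \rank (dmx V F b))%N.
Proof.
move=> bF.
pose Blk := block_mx (1%:M : 'M[R]_1) (V b) 0 (dmx V F b).
have EQ : (hmx V F :=: Blk)%MS.
  apply/eqmxP/andP; split.
    apply/row_subP => i; rewrite row_hmx; case: ifP => iF; last exact: sub0mx.
    have -> : hrow (V (enum_val i)) = row_mx 1%:M (V b) + row_mx 0 (V (enum_val i) - V b).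
      by rewrite add_row_mx addr0 addrC subrK /hrow const1E.
    apply: addmx_sub.
      apply: (eq_row_sub (lshift _ 0)); rewrite /Blk block_mxEv rowKu row_row_mx.
      by congr row_mx; apply/matrixP => i' j; rewrite !mxE !ord1.
    apply: (eq_row_sub (rshift _ i)); rewrite /Blk block_mxEv rowKd row_row_mx row0 rowK iF.
    by [].
  rewrite /Blk block_mxEv col_mx_sub; apply/andP; split.
    by rewrite -const1E; exact: hrow_sub bF.
  apply/row_subP => i; rewrite row_row_mx row0 rowK; case: ifP => iF.
    have -> : row_mx 0 (V (enum_val i) - V b) = hrow (V (enum_val i)) - hrow (V b).
      by rewrite /hrow opp_row_mx add_row_mx subrr.
    by apply: addmx_sub; rewrite ?(eqmx_opp _) hrow_sub.
  by rewrite row_mx0 sub0mx.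
rewrite EQ.
pose U := block_mx (1%:M : 'M[R]_1) (- V b) 0 (1%:M : 'M[R]_m).
have Uu : U \in unitmx by rewrite unitmxE det_ublock !det1 mulr1 unitr1.
rewrite -(mxrankMfree Blk (_ : row_free U)) ?row_free_unit //.
rewrite /Blk /U mulmx_block !mulmx0 !mul1mx !mulmx1 !addr0 mul0mx add0r.
by rewrite addrC subrr rank_diag_block_mx mxrank1.
Qed.

End General.


Section Prod.
Variable R : rcfType.
Variable r : nat.
Variable T : 'I_r -> finType.
Variable e : 'I_r -> nat.
Variable Q : forall i, T i -> 'rV[R]_(e i).

Local Notation X := {dffun forall i, T i}.
Local Notation P := (@prod_pts R r T e Q).

Definition emb i : 'M[R]_(e i, \sum_j e j) :=
  \mxrow_j (if i == j then conform_mx (0 : 'M[R]_(e i, e j)) (1%:M : 'M[R]_(e i))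
       else (0 : 'M[R]_(e i, e j))).

Lemma mxrow_emb (w : forall i, 'rV[R]_(e i)) :
  \mxrow_j w j = \sum_i w i *m emb i.
Proof.
rewrite /emb; transitivity (\mxrow_j (\sum_i w i *m
   (if i == j then conform_mx (0 : 'M[R]_(e i, e j)) (1%:M : 'M[R]_(e i))
       else (0 : 'M[R]_(e i, e j))))).
  apply: eq_mxrow => j.
  rewrite (bigD1 j) //= eqxx conform_mx_id mulmx1 big1 ?addr0 // => i /negbTE ->.
  by rewrite mulmx0.
by rewrite mxrow_sum; apply: eq_bigr => i _; rewrite mul_mxrow.
Qed.

Definition upd (x : X) i (s : T i) : X := finfun (fun j => dfwith x s j).
Arguments upd x i s : clear implicits.

Lemma upd_in (x : X) i s : upd x i s i = s.
Proof. by rewrite ffunE dfwith_in. Qed.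

Lemma upd_out (x : X) i s j : i != j -> upd x i s j = x j.
Proof. by move=> ij; rewrite ffunE dfwith_out. Qed.

Lemma P_upd (x : X) i (s : T i) : P (upd x i s) - P x = (Q s - Q (x i)) *m emb i.
Proof.
rewrite /prod_pts -mxrowB mxrow_emb [LHS](bigD1 i) //= upd_in [X in _ + X = _]big1 ?addr0 // => j ij.
by rewrite upd_out 1?eq_sym // subrr mul0mx.
Qed.

Lemma dotv_P c (x : X) :
  dotv c (P x) = \sum_i dotv (submxrow c i) (Q (x i)).
Proof.
rewrite /dotv /prod_pts -[c in LHS]submxrowK tr_mxrow mul_mxrow_mxcol summxE.
by [].
Qed.

Definition amax (U : finType) (f : U -> R) : {set U} :=
  [set t | [forall s, f s <= f t]].

Definition prodset (G : forall i, {set T i}) : {set X} :=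
  [set x : X | [forall i, x i \in G i]].

Lemma amax_sum (f : forall i, T i -> R) :
  amax (fun x : X => \sum_i f i (x i)) = prodset (fun i => amax (f i)).
Proof.
apply/setP => x; rewrite !inE; apply/forallP/forallP => H.
  move=> i; rewrite inE; apply/forallP => s.
  have := H (upd x i s); rewrite (bigD1 i) //= [X in _ <= X](bigD1 i) //= upd_in.
  rewrite (eq_bigr (fun j => f j (x j))); first by rewrite lerD2r.
  by move=> j ij; rewrite upd_out // eq_sym.
move=> y; apply: ler_sum => i _; have := H i; rewrite inE => /forallP; apply.
Qed.


Lemma face_prod (F : {set X}) :
  face_of P F <-> F = set0 \/
    exists c : forall i, 'rV[R]_(e i),
      F = prodset (fun i => amax (fun s => dotv (c i) (Q s))).
Proof.
split => [[->|[c ->]]|[->|[c ->]]]; first by left.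
- right; exists (fun i => submxrow c i).
  rewrite -amax_sum; apply/setP => x; rewrite !inE.
  apply/forallP/forallP => H y; have := H y; by rewrite !dotv_P.
- by left.
- right; exists (\mxrow_i c i).
  rewrite -amax_sum; apply/setP => x; rewrite !inE.
  have Ec : forall z : X, \sum_i dotv (submxrow (\mxrow_i c i) i) (Q (z i)) =
                          \sum_i dotv (c i) (Q (z i)).
    by move=> z; apply: eq_bigr => i _; rewrite mxrowK.
  apply/forallP/forallP => H y; have := H y; by rewrite !dotv_P !Ec.
Qed.

Lemma mxrow_K_emb i m (K : 'M[R]_(m, e i)) :
  \mxrow_j (if i == j then conform_mx (0 : 'M[R]_(m, e j)) K else 0) = K *m emb i.
Proof.
rewrite /emb mul_mxrow; apply: eq_mxrow => j.
case: (eqVneq i j) => [E|_]; last by rewrite mulmx0.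
by subst j; rewrite !conform_mx_id mulmx1.
Qed.

Lemma dmx_prod (G : forall i, {set T i}) (x0 : X) :
  x0 \in prodset G ->
  (dmx P (prodset G) x0 :=: \mxdiag_i <<dmx (Q (i:=i)) (G i) (x0 i)>>)%MS.
Proof.
move=> x0F.
have E1 : (\mxdiag_i <<dmx (Q (i:=i)) (G i) (x0 i)>> :=:
           \sum_i <<dmx (Q (i:=i)) (G i) (x0 i) *m emb i>>)%MS.
  rewrite /mxdiag mxblockEv; apply: eqmx_trans (eqmx_col _) _.
  apply/eqmxP/andP; split; apply/sumsmx_subP => i _; apply: (sumsmx_sup i) => //;
    rewrite !genmxE mxrow_K_emb (eqmxMr _ (genmxE _)) //.
apply: (eqmx_trans _ (eqmx_sym E1)); apply/eqmxP/andP; split.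
  apply/row_subP => k; rewrite rowK; case: ifP => kF; last exact: sub0mx.
  rewrite /prod_pts -mxrowB mxrow_emb; apply: summx_sub => i _.
  apply: (sumsmx_sup i) => //; rewrite genmxE.
  move: kF; rewrite inE => /forallP/(_ i) xi.
  apply: (eq_row_sub (enum_rank (enum_val k i))).
  by rewrite row_mul rowK enum_rankK xi.
apply/sumsmx_subP => i _; rewrite genmxE; apply/row_subP => k.
rewrite row_mul rowK; case: ifP => kG; last by rewrite mul0mx sub0mx.
have uF : upd x0 i (enum_val k) \in prodset G.
  rewrite inE; apply/forallP => j; case: (eqVneq i j) => [E|ij].
    by subst j; rewrite upd_in.
  by rewrite upd_out //; move: x0F; rewrite inE => /forallP.
apply: (eq_row_sub (enum_rank (upd x0 i (enum_val k)))).
by rewrite rowK enum_rankK uF P_upd.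
Qed.



Lemma rank_hmx_prod (G : forall i, {set T i}) (x0 : X) :
  x0 \in prodset G ->
  \rank (hmx P (prodset G)) =
    (1 + \sum_i (\rank (hmx (Q (i:=i)) (G i))).-1)%N.
Proof.
move=> x0F; rewrite (rank_hmx_dmx _ x0F) (dmx_prod x0F) rank_mxdiag.
congr (1 + _)%N; apply: eq_bigr => i _.
have xi : x0 i \in G i by move: x0F; rewrite inE => /forallP.
by rewrite mxrank_gen (rank_hmx_dmx _ xi).
Qed.

End Prod.


Section Factors.
Variable R : rcfType.

Lemma hrow_mul m (v : 'rV[R]_m) (c : R) (w : 'cV[R]_m) :
  hrow v *m col_mx c%:M w = (c + (v *m w) 0 0)%:M.
Proof.
rewrite /hrow mul_row_col const1E mul1mx; apply/matrixP => i j.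
by rewrite !ord1 !mxE /= mulr1n.
Qed.

Definition lagr (U : finType) (s : U -> R) (G : {set U}) g : {poly R} :=
  let L := \prod_(h in G :\ g) ('X - (s h)%:P) in (L.[s g])^-1 *: L.

Lemma rank_moment (U : finType) D (s : U -> R) (G : {set U}) :
  {in G &, injective s} -> (#|G| <= D.+1)%N ->
  \rank (hmx (fun x => moment D (s x)) G) = #|G|.
Proof.
move=> sinj GD.
pose fs g := let p := lagr s G g in col_mx (p`_0)%:M (\col_(a < D) p`_a.+1).
apply: (@rank_hmx_indep _ _ _ _ _ fs) => g h gG hG.
rewrite /fs hrow_mul; congr (_%:M).
have Hs : (size (lagr s G g) <= D.+1)%N.
  apply: leq_trans (size_scale_leq _ _) _.
  rewrite size_prod; last by move=> i _; rewrite polyXsubC_eq0.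
  under eq_bigr do rewrite size_XsubC.
  rewrite sum_nat_const -addn1 mulnC.
  have Hc : (#|G :\ g| < #|G|)%N by rewrite (cardsD1 g G) gG.
  rewrite (_ : #|_| = #|G :\ g|) // mul2n -addnn -addnA addKn addn1 ltnS.
  by rewrite -ltnS (leq_trans Hc).
rewrite [X in X = _](_ : _ = (lagr s G g).[s h]); last first.
  rewrite (horner_coef_wide _ Hs) big_ord_recl expr0 mulr1; congr (_ + _).
  by rewrite mxE; apply: eq_bigr => a _; rewrite !mxE mulrC.
rewrite /lagr hornerZ !horner_prod.
under eq_bigr do rewrite hornerXsubC.
under [X in _ * X = _]eq_bigr do rewrite hornerXsubC.
have nz : \prod_(i in G :\ g) (s g - s i) != 0.
  apply/prodf_neq0 => i; rewrite !inE => /andP [ig iG].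
  by rewrite subr_eq0; apply: contra ig => /eqP E; rewrite (sinj _ _ iG gG (esym E)).
case: (eqVneq g h) => [<-|gh]; first by rewrite mulVf.
rewrite [X in _ * X](bigD1 h) /=; last by rewrite !inE eq_sym gh hG.
by rewrite subrr mul0r mulr0.
Qed.


Lemma rank_simplex n (G : {set 'I_n.+1}) :
  \rank (hmx (@simplex_pts R n) G) = #|G|.
Proof.
pose fs (g : 'I_n.+1) : 'cV[R]_(1 + n) :=
  if unlift ord0 g is Some j then col_mx 0%:M (delta_mx j 0)
  else col_mx 1%:M (const_mx (-1)).
apply: (@rank_hmx_indep _ _ _ _ _ fs) => g h _ _.
rewrite /fs /simplex_pts.
case: unliftP => [j ->|->]; case: unliftP => [j' ->|->];
  rewrite hrow_mul; congr (_%:M).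
- rewrite mul_delta_mx_cond (inj_eq lift_inj) eq_sym.
  by case: (j' == j); rewrite ?mulr1n ?mulr0n !mxE ?add0r.
- rewrite (negbTE (neq_lift _ _)) mxE.
  rewrite (bigD1 j) //= big1 ?addr0 ?mxE ?eqxx /= ?mul1r ?subrr //.
  by move=> i ij; rewrite !mxE (negbTE ij) mul0r.
- by rewrite eq_sym (negbTE (neq_lift _ _)) mul0mx !mxE add0r.
- by rewrite eqxx mul0mx !mxE addr0.
Qed.

End Factors.


Section Fac.
Variable R : rcfType.

Lemma subset_card (U : finType) (G : {set U}) m :
  (m <= #|G|)%N -> exists2 G' : {set U}, G' \subset G & #|G'| = m.
Proof.
case/card_geqP => s [us ss Gs]; exists [set x in s].
  by apply/subsetP => x; rewrite inE => /Gs.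
by rewrite cardsE (card_uniqP us).
Qed.

Lemma rank_cyc (U : finType) D (s : U -> R) (G : {set U}) :
  {in G &, injective s} ->
  \rank (hmx (fun x => moment D (s x)) G) = minn #|G| D.+1.
Proof.
move=> sinj; case: (leqP #|G| D.+1) => GD.
  by rewrite rank_moment.
apply/eqP; rewrite eqn_leq; apply/andP; split.
  by apply: leq_trans (rank_leq_col _) _; rewrite add1n.
have [G' G'G cG'] := subset_card (ltnW GD).
rewrite -cG' -(@rank_moment _ _ D s G') ?cG' //; last first.
  by move=> a b aG bG; apply: sinj; apply: (subsetP G'G).
exact: rank_hmx_mono.
Qed.

Lemma amax_char (U : finType) (f : U -> R) (G : {set U}) :
  G != set0 ->
  (forall g h, g \in G -> h \in G -> f h = f g) ->
  (forall g h, g \in G -> h \notin G -> f h < f g) -> amax f = G.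
Proof.
case/set0Pn => g0 g0G Heq Hlt; apply/setP => x; rewrite inE.
case: (boolP (x \in G)) => xG.
  apply/forallP => y; case: (boolP (y \in G)) => yG.
    by rewrite (Heq x y).
  exact: ltW (Hlt _ _ xG yG).
apply/negbTE; apply/negP => /forallP/(_ g0).
by rewrite leNgt Hlt.
Qed.

Lemma dotv_delta n (c : 'rV[R]_n) j : dotv c (delta_mx 0 j) = c 0 j.
Proof.
rewrite /dotv mxE (bigD1 j) //= big1 ?addr0 ?mxE ?eqxx ?mulr1 //.
by move=> a aj; rewrite !mxE (negbTE aj) andbF mulr0.
Qed.

Lemma simplex_face n (G : {set 'I_n.+1}) :
  G != set0 -> exists c, G = amax (fun s => dotv c (@simplex_pts R n s)).
Proof.
move=> G0.
exists (\row_j ((lift ord0 j \in G)%:R - (ord0 \in G)%:R)).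
have E : forall s, dotv (\row_j ((lift ord0 j \in G)%:R - (ord0 \in G)%:R))
                     (@simplex_pts R n s) = (s \in G)%:R - (ord0 \in G)%:R.
  move=> s; rewrite /simplex_pts; case: unliftP => [j ->|->].
    by rewrite dotv_delta mxE.
  by rewrite subrr /dotv trmx0 mulmx0 mxE.
symmetry; apply: amax_char => // [g h gG hG|g h gG hG]; rewrite !E ?gG ?hG //.
by rewrite (negbTE hG) ltrD2r ltr01.
Qed.


Lemma moment_face D (U : finType) (s : U -> R) (G : {set U}) :
  injective s -> G != set0 -> (2 * #|G| <= D)%N ->
  exists c, G = amax (fun x => dotv c (moment D (s x))).
Proof.
move=> sinj G0 GD.
pose q := \prod_(g in G) ('X - (s g)%:P) ^+ 2.
pose p := - q.
have Hs : (size p <= D.+1)%N.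
  rewrite size_polyN size_prod; last by move=> i _; rewrite expf_neq0 ?polyXsubC_eq0.
  under eq_bigr do rewrite size_exp_XsubC.
  rewrite sum_nat_const (_ : #|_| = #|G|) //.
  by rewrite mulnC -addn1 -[3%N]/(1 + 2)%N mulnDl mul1n -addnA addKn addn1 ltnS.
exists (\row_(a < D) p`_a.+1).
have E : forall y, dotv (\row_(a < D) p`_a.+1) (moment D y) = p.[y] - p`_0.
  move=> y; rewrite (horner_coef_wide _ Hs) big_ord_recl expr0 mulr1 addrC addKr.
  rewrite /dotv mxE; apply: eq_bigr => a _; rewrite !mxE mulrC.
  by [].
have Hp : forall y, p.[y] = - \prod_(g in G) (y - s g) ^+ 2.
  move=> y; rewrite hornerN horner_prod; congr (- _); apply: eq_bigr => g _.
  by rewrite horner_exp hornerXsubC.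
symmetry; apply: amax_char => // [g h gG hG|g h gG hG]; rewrite !E !Hp.
  have Z : forall x, x \in G -> \prod_(g0 in G) (s x - s g0) ^+ 2 = 0.
    by move=> x xG; rewrite (bigD1 x) //= subrr expr0n mul0r.
  by rewrite !Z.
rewrite ltrD2r ltrN2 (bigD1 g) //= subrr expr0n mul0r.
rewrite lt0r prodr_ge0 ?andbT; last by move=> i _; exact: sqr_ge0.
apply/prodf_neq0 => i iG; rewrite expf_neq0 // subr_eq0.
by apply: contra hG => /eqP/sinj ->.
Qed.

End Fac.


Section Fac2.
Variable R : rcfType.
Variables (k ni : nat) (tf : nat -> R).
Hypothesis tinj : (2 * k + 3 <= ni)%N -> forall a b : 'I_ni.+1, tf a = tf b -> a = b.

Lemma fac_rank (G : {set 'I_ni.+1}) :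
  \rank (hmx (@factor_pts R k ni tf) G) =
    if (2 * k + 3 <= ni)%N then minn #|G| (2 * k + 3) else #|G|.
Proof.
move: tinj; rewrite /factor_pts /factor_dim; case: (2 * k + 3 <= ni)%N => [ti|_].
  rewrite (@rank_cyc _ _ (2 * k + 2) (fun j : 'I_ni.+1 => tf j)) ?addn3 ?addn2 //.
  by move=> a b _ _; apply: ti.
exact: rank_simplex.
Qed.

Lemma fac_face (G : {set 'I_ni.+1}) :
  G != set0 -> (#|G| <= k.+1)%N ->
  exists c, G = amax (fun s => dotv c (@factor_pts R k ni tf s)).
Proof.
move=> G0 Gk; move: tinj; rewrite /factor_pts /factor_dim.
case: (2 * k + 3 <= ni)%N => [ti|_]; last exact: simplex_face.
apply: (@moment_face _ _ _ (fun j : 'I_ni.+1 => tf j)) => //.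
  by move=> a b; apply: ti.
by rewrite (_ : (2 * k + 2 = 2 * k.+1)%N) ?leq_mul2l ?Gk ?orbT // mulnS addnC.
Qed.

Lemma fac_affine : exists (A : 'M[R]_(ni, factor_dim k ni)) b,
  forall j, @factor_pts R k ni tf j = simplex_pts R j *m A + b.
Proof.
rewrite /factor_pts /factor_dim; case: (2 * k + 3 <= ni)%N.
  exists (\matrix_(j < ni) (moment (2 * k + 2) (tf j.+1) - moment (2 * k + 2) (tf 0))).
  exists (moment (2 * k + 2) (tf 0)) => j; rewrite /simplex_pts.
  case: unliftP => [j' ->|->]; last by rewrite mul0mx add0r.
  by rewrite -rowE rowK lift0 subrK.
exists 1%:M, 0 => j; by rewrite mulmx1 addr0.
Qed.

End Fac2.


Lemma dep_choice (I : Type) (A : I -> Type) (P : forall i, A i -> Prop) :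
  (forall i, exists a, P i a) -> exists f : forall i, A i, forall i, P i (f i).
Proof.
move=> H; exists (fun i => proj1_sig (constructive_indefinite_description _ (H i))).
by move=> i; case: (constructive_indefinite_description _ (H i)).
Qed.

Lemma min_exists (P : nat -> Prop) :
  (exists m, P m) -> exists m, P m /\ forall m', P m' -> (m <= m')%N.
Proof.
case=> m; elim: m {-2}m (leqnn m) => [|N IH] m Hm Pm.
  by exists m; split => // m' _; move: Hm; rewrite leqn0 => /eqP ->.
case: (classic (exists m', P m' /\ (m' < m)%N)) => [[m' [Pm' lt]]|nex].
  by apply: (IH m') => //; rewrite -ltnS (leq_trans lt).
exists m; split => // m' Pm'; rewrite leqNgt; apply/negP => lt.
by apply: nex; exists m'.
Qed.

Section Main.
Variable R : rcfType.

Lemma amax_neq0 (U : finType) (u0 : U) (f : U -> R) : amax f != set0.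
Proof.
apply/set0Pn; case: (@Order.TotalTheory.arg_maxP _ R U u0 predT f isT) => i _ Hi.
by exists i; rewrite inE; apply/forallP => j; apply: Hi.
Qed.


Lemma nat_aux1 (a k : nat) (b : bool) : (0 < a)%N ->
  ((if b then minn a (2 * k + 3) else a).-1 <= k)%N -> (a <= k.+1)%N.
Proof.
move=> a0; case: b => /=; last by rewrite -ltnS prednK.
case: (leqP a (2 * k + 3)%N) => h; first by rewrite -ltnS prednK.
rewrite addn3 /=.
by move/ltnW; rewrite ltnNge mul2n -addnn leq_addl.
Qed.

Lemma nat_aux2 (a k : nat) (b : bool) : (a <= k.+1)%N ->
  (if b then minn a (2 * k + 3) else a) = a.
Proof.
move=> h; case: b => //; apply/minn_idPl; apply: leq_trans h _.
rewrite addn3 mul2n -addnn ltnS; apply: leq_trans (leq_addl k k) _.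
by apply: leq_trans (leqnSn _) (leqnSn _).
Qed.

Lemma leq_term (r : nat) (f : 'I_r -> nat) i : (f i <= \sum_j f j)%N.
Proof. by rewrite (bigD1 i) //= leq_addr. Qed.

Variables (k r : nat) (n : 'I_r -> nat) (t : 'I_r -> nat -> R).
Hypothesis ht : forall i, (2 * k + 3 <= n i)%N ->
  forall a b : 'I_(n i).+1, t i a = t i b -> a = b.
Local Notation X := {dffun forall i : 'I_r, 'I_(n i).+1}.

Lemma pick_x0 (G : forall i, {set 'I_(n i).+1}) :
  (forall i, G i != set0) -> exists x0 : X, x0 \in prodset G.
Proof.
move=> G0; have [g Hg] := @dep_choice _ (fun i => 'I_(n i).+1)
   (fun i g => g \in G i) (fun i => set0Pn _ (G0 i)).
exists (finfun g : X); rewrite inE; apply/forallP => i; rewrite ffunE; exact: Hg.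
Qed.

Lemma rank_V (G : forall i, {set 'I_(n i).+1}) (x0 : X) : x0 \in prodset G ->
  \rank (hmx (thm_pts k n t) (prodset G)) =
  (1 + \sum_i (if (2 * k + 3 <= n i)%N then minn #|G i| (2 * k + 3)
               else #|G i|).-1)%N.
Proof.
move=> x0G; rewrite /thm_pts (rank_hmx_prod _ x0G); congr (1 + _)%N.
by apply: eq_bigr => i _; rewrite fac_rank //; apply: ht.
Qed.

Lemma rank_D (G : forall i, {set 'I_(n i).+1}) (x0 : X) : x0 \in prodset G ->
  \rank (hmx (@Delta_pts R r n) (prodset G)) = (1 + \sum_i (#|G i|).-1)%N.
Proof.
move=> x0G; rewrite /Delta_pts (rank_hmx_prod _ x0G); congr (1 + _)%N.
by apply: eq_bigr => i _; rewrite rank_simplex.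
Qed.

Lemma prodset_eq (G G' : forall i, {set 'I_(n i).+1}) :
  (forall i, G i = G' i) -> prodset G = prodset G'.
Proof. by move=> E; apply/setP => x; rewrite !inE; apply/forallP/forallP => H i; rewrite ?E // -E. Qed.


Lemma skel_VD (F : {set X}) :
  skel (thm_pts k n t) k F <-> skel (@Delta_pts R r n) k F.
Proof.
split; case=> Hf Hr.
- move/face_prod: Hf => [E|[c E]].
    by subst F; split; [left|rewrite hmx0 mxrank0].
  set G := (fun i => amax _) in E.
  have G0 : forall i, G i != set0 by move=> i; apply: (amax_neq0 ord0).
  have [x0 x0G] := pick_x0 G0.
  move: Hr; rewrite E (rank_V x0G) add1n ltnS => Hr.
  have Gk : forall i, (#|G i| <= k.+1)%N.
    move=> i; apply: (nat_aux1 (b := (2 * k + 3 <= n i)%N)); first by rewrite card_gt0.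
    exact: leq_trans (leq_term _ i) Hr.
  split.
    apply/face_prod; right.
    have [c' Hc'] := @dep_choice _ (fun i => 'rV[R]_(n i))
      (fun i c => G i = amax (fun s => dotv c (@simplex_pts R (n i) s)))
      (fun i => @simplex_face R _ _ (G0 i)).
    by exists c'; apply: prodset_eq.
  rewrite (rank_D x0G) add1n ltnS; apply: leq_trans Hr.
  by apply: leq_sum => i _; rewrite (nat_aux2 _ (Gk i)).
- move/face_prod: Hf => [E|[c E]].
    by subst F; split; [left|rewrite hmx0 mxrank0].
  set G := (fun i => amax _) in E.
  have G0 : forall i, G i != set0 by move=> i; apply: (amax_neq0 ord0).
  have [x0 x0G] := pick_x0 G0.
  move: Hr; rewrite E (rank_D x0G) add1n ltnS => Hr.
  have Gk : forall i, (#|G i| <= k.+1)%N.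
    move=> i; apply: (nat_aux1 (b := false)); first by rewrite card_gt0.
    exact: leq_trans (leq_term _ i) Hr.
  split.
    apply/face_prod; right.
    have [c' Hc'] := @dep_choice _ (fun i => 'rV[R]_(factor_dim k (n i)))
      (fun i c => G i = amax (fun s => dotv c (@factor_pts R k (n i) (t i) s)))
      (fun i => fac_face (@ht i) (G0 i) (Gk i)).
    by exists c'; apply: prodset_eq.
  rewrite (rank_V x0G) add1n ltnS; apply: leq_trans Hr.
  by apply: leq_sum => i _; rewrite (nat_aux2 _ (Gk i)).
Qed.


Lemma pdim_V : pdim (thm_pts k n t) = (\sum_i factor_dim k (n i))%N.
Proof.
rewrite /pdim (_ : setT = prodset (fun i => [set: 'I_(n i).+1])); last first.
  by apply/setP => x; rewrite !inE; apply/esym/forallP => i; rewrite inE.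
have x0G : (finfun (fun i => ord0) : X) \in prodset (fun i => [set: 'I_(n i).+1]).
  by rewrite inE; apply/forallP => i; rewrite inE.
rewrite (rank_V x0G) add1n /=; apply: eq_bigr => i _.
rewrite cardsT card_ord /factor_dim; case: ifP => // h.
rewrite (minn_idPr (_ : (2 * k + 3 <= (n i).+1)%N)); last exact: leq_trans h (leqnSn _).
by rewrite addn3 addn2.
Qed.

Lemma D_eq : let I := [set i : 'I_r | (2 * k + 3 <= n i)%N] in
  ((2 * k + 2) * #|I| + \sum_(i < r | i \notin I) n i)%N =
  (\sum_i factor_dim k (n i))%N.
Proof.
move=> I; rewrite [RHS](bigID (fun i => i \in I)) /=; congr (_ + _)%N.
  rewrite mulnC -sum_nat_const; apply: eq_bigr => i; rewrite inE /factor_dim => ->.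
  by [].
by apply: eq_bigr => i; rewrite inE /factor_dim => /negbTE ->.
Qed.

End Main.


Section PP.
Variable R : rcfType.

Lemma amax_shift (U : finType) (f : U -> R) a : amax (fun x => f x + a) = amax f.
Proof. by apply/setP => x; rewrite !inE; apply/forallP/forallP => H y; have := H y; rewrite lerD2r. Qed.

Lemma dotv_lift m (c : 'rV[R]_(m + 1)) (v : 'rV[R]_m) :
  dotv c (row_mx v 1%:M) = dotv (lsubmx c) v + rsubmx c 0 0.
Proof.
rewrite /dotv -[c in LHS](hsubmxK c) tr_row_mx mul_row_col trmx1 mulmx1 mxE.
by [].
Qed.

Lemma face_lift (T : finType) m (V : T -> 'rV[R]_m) F :
  face_of (fun u => row_mx (V u) (1%:M : 'M[R]_1)) F <-> face_of V F.
Proof.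
split => [[->|[c ->]]|[->|[c ->]]]; try by left.
  right; exists (lsubmx c).
  by apply/setP => x; rewrite !inE; apply/forallP/forallP => H y; have := H y; rewrite !dotv_lift lerD2r.
right; exists (row_mx c 0).
apply/setP => x; rewrite !inE; apply/forallP/forallP => H y; have := H y;
  by rewrite !dotv_lift row_mxKl row_mxKr !mxE !addr0.
Qed.


Variables (k r : nat) (n : 'I_r -> nat) (t : 'I_r -> nat -> R).
Local Notation X := {dffun forall i : 'I_r, 'I_(n i).+1}.
Local Notation fd := (fun i => factor_dim k (n i)).

Lemma ppsn_proj : exists (N : nat) (U : finType) (W : U -> 'rV[R]_N)
   (A : 'M[R]_(N, \sum_i factor_dim k (n i))),
  comb_equiv W (@Delta_pts R r n) /\
  (forall x, in_hull (thm_pts k n t) x <-> in_hull (fun u => W u *m A) x).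
Proof.
have H : forall i, exists p : ('M[R]_(n i, factor_dim k (n i)) * 'rV[R]_(factor_dim k (n i)))%type,
    forall j, @factor_pts R k (n i) (t i) j = simplex_pts R j *m p.1 + p.2.
  by move=> i; have [A [b Hb]] := fac_affine k (n i) (t i); exists (A, b).
have [AB HAB] := dep_choice H.
pose A0 : 'M[R]_(\sum_i n i, \sum_i factor_dim k (n i)) :=
  \mxcol_i ((AB i).1 *m emb R fd i).
pose b : 'rV[R]_(\sum_i factor_dim k (n i)) := \mxrow_i (AB i).2.
exists (\sum_i n i + 1)%N, X, (fun u => row_mx (@Delta_pts R r n u) 1%:M), (col_mx A0 b).
have EV : forall u, thm_pts k n t u = row_mx (@Delta_pts R r n u) 1%:M *m col_mx A0 b.
  move=> u; rewrite mul_row_col mul1mx /Delta_pts /prod_pts mul_mxrow_mxcol.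
  rewrite /thm_pts /prod_pts.
  transitivity (\mxrow_i (simplex_pts R (u i) *m (AB i).1 + (AB i).2)).
    by apply: eq_mxrow => i; apply: HAB.
  rewrite /b !mxrow_emb -big_split /=; apply: eq_bigr => i _.
  by rewrite mulmxDl mulmxA.
split.
  exists id; split; [|split].
  - by move=> F /face_lift.
  - by move=> G HG; exists G => //; apply/face_lift.
  - by [].
move=> x; split; case=> l [l0 [l1 ->]]; exists l; do ! split => //;
  by apply: eq_bigr => u _; rewrite EV.
Qed.

End PP.


Unset Implicit Arguments. Set Strict Implicit.


Theorem mainTheorem5 (R : rcfType) (k r : nat) (n : 'I_r -> nat)
  (t : 'I_r -> nat -> R)
  (hr : (1 <= r)%N) (hn : forall i, (1 <= n i)%N)
  (ht : forall i, (2 * k + 3 <= n i)%N ->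
        forall a b : 'I_(n i).+1, t i a = t i b -> a = b) :
  let I := [set i : 'I_r | (2 * k + 3 <= n i)%N] in
  let D := ((2 * k + 2) * #|I| + \sum_(i < r | i \notin I) n i)%N in
  PPSN k n (thm_pts k n t) /\ pdim (thm_pts k n t) = D /\
  exists m1 m2 : nat,
    is_min_dim (fun T d (V : T -> 'rV[R]_d) => PSN k n V) m1 /\
    is_min_dim (fun T d (V : T -> 'rV[R]_d) => PPSN k n V) m2 /\
    (m1 <= m2 <= D)%N.
Proof.
move=> I D.
have Hpsn : PSN k n (thm_pts k n t).
  exists id; split; [|split].
  - by move=> F /(skel_VD ht).
  - by move=> G HG; exists G => //; apply/(skel_VD ht).
  - by [].
have Hppsn : PPSN k n (thm_pts k n t) by split; [exact: Hpsn | exact: ppsn_proj].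
have Hdim : pdim (thm_pts k n t) = D.
  by rewrite (pdim_V ht) /D /I D_eq.
split => //; split => //.
have [m1 [[T1 [d1 [V1 [P1 E1]]]] M1]] :=
  @min_exists (fun m => exists (T : finType) d (V : T -> 'rV[R]_d), PSN k n V /\ pdim V = m)
    (ex_intro _ D (ex_intro _ _ (ex_intro _ _ (ex_intro _ _ (conj Hpsn Hdim))))).
have [m2 [[T2 [d2 [V2 [P2 E2]]]] M2]] :=
  @min_exists (fun m => exists (T : finType) d (V : T -> 'rV[R]_d), PPSN k n V /\ pdim V = m)
    (ex_intro _ D (ex_intro _ _ (ex_intro _ _ (ex_intro _ _ (conj Hppsn Hdim))))).
exists m1, m2; split; [|split].
- split; first by exists T1, d1, V1.
  by move=> T d V PV; apply: M1; exists T, d, V.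
- split; first by exists T2, d2, V2.
  by move=> T d V PV; apply: M2; exists T, d, V.
- apply/andP; split.
    by apply: M1; exists T2, d2, V2; split => //; exact: P2.1.
  by apply: M2; exists _, _, (thm_pts k n t).
Qed.
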